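(* Let $\omega\in\mathbb{H}$, and let $g\in\mathrm{PSL}_2(\mathbb{Z})$ be such that $g^{-1}\cdot\omega\in D_0+n$ for some $n\in\mathbb{Z}$. Assume $g\cdot\infty\neq\infty$ and write $g\cdot\infty=p/q$ in lowest terms with $q>0$. Let $\delta$ be the diameter of the (Euclidean) circle in the upper half-plane that is tangent to the real axis at $p/q$ and passes through $\omega$. Then $f(\omega)=\delta\,q^2$.
   Context: $\mathbb{H}=\{\omega\in\mathbb{C}:\mathrm{Im}(\omega)>0\}$. For $\omega\in\mathbb{H}$, $d(\omega)=\min\{|\alpha+\beta\omega| : \alpha,\beta\in\mathbb{Z},\ (\alpha,\beta)\neq(0,0)\}$ and $f(\omega)=d(\omega)^2/\mathrm{Im}(\omega)$. $\mathrm{PSL}_2(\mathbb{Z})$ acts on $\mathbb{H}\cup\mathbb{R}\cup\{\infty\}$ by $\begin{pmatrix}a&b\\c&d\end{pmatrix}\cdot\omega=\frac{a\omega+b}{c\omega+d}$, with $g\cdot\infty=a/c$ if $c\ne0$ and $g\cdot\infty=\infty$ if $c=0$. $D_0=\{\omega\in\mathbb{C}: -1/2\le\mathrm{Re}(\omega)\le1/2,\ |\omega|\ge1\}$ and $D_0+n=\{\zeta+n:\zeta\in D_0\}$. *)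

(* Defs.v *)
From Stdlib Require Import Reals ZArith.
From Coquelicot Require Import Coquelicot.
Open Scope R_scope.

Definition in_H (w : C) : Prop := 0 < Im w.

(* d(w) = min { |alpha + beta w| : (alpha,beta) in Z^2 \ {(0,0)} },
   written as the infimum of that set (the minimum is attained). *)
Definition lattice_norms (w : C) (r : R) : Prop :=
  exists alpha beta : Z, (alpha, beta) <> (0%Z, 0%Z) /\
    r = Cmod (RtoC (IZR alpha) + RtoC (IZR beta) * w)%C.

Definition d_fun (w : C) : R := real (Glb_Rbar (lattice_norms w)).

Definition f_fun (w : C) : R := (d_fun w) ^ 2 / Im w.

(* An element of PSL_2(Z), represented by an integer matrix of determinant 1
   (the action does not depend on the choice of sign). *)
Record SL2Z := mkSL2Z {
  ga : Z; gb : Z; gc : Z; gd : Z;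
  gdet : (ga * gd - gb * gc)%Z = 1%Z }.

Definition act (g : SL2Z) (w : C) : C :=
  ((RtoC (IZR (ga g)) * w + RtoC (IZR (gb g))) /
   (RtoC (IZR (gc g)) * w + RtoC (IZR (gd g))))%C.

Lemma inv_det (g : SL2Z) : (gd g * ga g - (- gb g) * (- gc g))%Z = 1%Z.
Proof. destruct g as [a b c d h]; simpl; rewrite <- h; ring. Qed.

Definition ginv (g : SL2Z) : SL2Z :=
  mkSL2Z (gd g) (- gb g) (- gc g) (ga g) (inv_det g).

(* Action on infinity: None stands for infinity, Some x for the real x. *)
Definition act_infty (g : SL2Z) : option R :=
  if Z.eqb (gc g) 0 then None else Some (IZR (ga g) / IZR (gc g)).

Definition in_D0 (z : C) : Prop :=
  -1/2 <= Re z <= 1/2 /\ 1 <= Cmod z.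

Definition in_D0_shift (n : Z) (z : C) : Prop :=
  in_D0 (z - RtoC (IZR n))%C.

(* Main.v *)
Require Import Defs.
From Stdlib Require Import Reals ZArith Lra Lia Psatz.
From Coquelicot Require Import Coquelicot.
Open Scope R_scope.

Lemma int_ineq (m k : Z) : (m, k) <> (0%Z, 0%Z) -> (m*m - Z.abs (m*k) + k*k >= 1)%Z.
Proof.
  intros H. destruct (Z.eq_dec m 0) as [->|]; destruct (Z.eq_dec k 0) as [->|];
  [ now elim H | simpl; nia | rewrite Z.mul_0_r; simpl; nia | ];
  destruct (Z.abs_spec (m*k)) as [[? ->]|[? ->]]; nia.
Qed.

Lemma key_ineq (m k : Z) (ux uy : R) : (m, k) <> (0%Z, 0%Z) ->
  -1/2 <= ux <= 1/2 -> 1 <= ux^2+uy^2 ->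
  1 <= (IZR m + IZR k * ux)^2 + (IZR k * uy)^2.
Proof.
  intros H Hx Hu. pose proof (int_ineq m k H) as Hi.
  apply Z.ge_le in Hi. apply IZR_le in Hi.
  rewrite plus_IZR, minus_IZR, !mult_IZR, abs_IZR, mult_IZR in Hi.
  assert (Ha : - Rabs (IZR m * IZR k) <= 2 * (IZR m * IZR k) * ux).
  { destruct (Rabs_pos (IZR m * IZR k)).
    destruct (Rle_or_lt 0 (IZR m * IZR k)).
    - rewrite Rabs_right by lra. nra.
    - rewrite Rabs_left by lra. nra.
    - destruct (Rle_or_lt 0 (IZR m * IZR k)).
      + rewrite Rabs_right in * by lra. nra.
      + rewrite Rabs_left in * by lra. nra. }
  assert (IZR k * IZR k * 1 <= IZR k * IZR k * (ux^2+uy^2)).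
  { apply Rmult_le_compat_l; [nra|lra]. }
  nra.
Qed.

Lemma Cmod_ge1 (x : C) : 1 <= fst x ^ 2 + snd x ^ 2 -> 1 <= Cmod x.
Proof. intros H. unfold Cmod. rewrite <- sqrt_1. apply sqrt_le_1_alt. exact H. Qed.

Lemma Cmod_sq (x : C) : Cmod x ^ 2 = fst x ^ 2 + snd x ^ 2.
Proof. unfold Cmod. rewrite pow2_sqrt; [reflexivity|]. nra. Qed.

Theorem proposition3 (w : C) (g : SL2Z) (n p q : Z) (r : R) :
  in_H w ->
  in_D0_shift n (act (ginv g) w) ->
  act_infty g <> None ->
  act_infty g = Some (IZR p / IZR q) ->
  Z.gcd p q = 1%Z ->
  (0 < q)%Z ->
  0 < r ->
  Cmod (w - ((IZR p / IZR q)%R, r))%C = r ->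
  f_fun w = (2 * r) * (IZR q) ^ 2.
Proof.
  destruct g as [a b c d hdet].
  destruct w as [x y].
  intros Hy HD _ Hinf Hg Hq Hr Hc.
  unfold in_H, Im in Hy; simpl in Hy.
  set (z := act _ _) in HD.
  unfold in_D0_shift, in_D0 in HD. destruct HD as [Hre Hmod].
  unfold act_infty in Hinf; cbn [gc ga] in Hinf.
  unfold f_fun, d_fun, Im. cbn [snd].
  destruct (Z.eqb_spec c 0) as [Hc0|Hc0]; [discriminate|].
  injection Hinf as Hinf.
  assert (HcR : IZR c <> 0) by (apply not_0_IZR; auto).
  assert (HqR : IZR q <> 0) by (apply not_0_IZR; lia).
  assert (Haq : (a * q = p * c)%Z).
  { apply eq_IZR. rewrite !mult_IZR. 
    replace (IZR a) with (IZR a / IZR c * IZR c) by (field; auto).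
    replace (IZR p) with (IZR p / IZR q * IZR q) by (field; auto).
    rewrite Hinf. ring. }
  assert (Hcq : (c * c = q * q)%Z).
  { assert (H1 : (q = c * (d * p - b * q))%Z).
    { transitivity (q * (a*d - b*c))%Z; [rewrite hdet; ring|].
      transitivity (d * (a*q) - b*c*q)%Z; [ring|]. rewrite Haq. ring. }
    assert (H2 : Z.divide q c).
    { apply Z.gauss with p. exists a. lia. rewrite Z.gcd_comm; auto. }
    destruct H2 as [s Hs]. subst c.
    assert (Hs1 : (s * (d * p - b * q) = 1)%Z).
    { apply (Z.mul_reg_l _ _ q); [lia|]. rewrite Z.mul_1_r. rewrite H1 at 3. ring. }
    apply Z.eq_mul_1 in Hs1. destruct Hs1 as [->| ->]; ring. }
  set (w := (x, y)).
  set (e := (RtoC (IZR a) - RtoC (IZR c) * w)%C).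
  assert (He : e <> 0%C).
  { intros H. unfold e, w in H. injection H. intros H1 H2. simpl in *. nra. }
  assert (Hz : (z * e = RtoC (IZR d) * w - RtoC (IZR b))%C).
  { unfold z, e, act, ginv. cbn [ga gb gc gd]. fold w. rewrite !opp_IZR, !RtoC_opp. field.
    intros H. apply He. unfold e. rewrite <- H. ring. }
  assert (Hid : forall al be : Z,
    (RtoC (IZR al) + RtoC (IZR be) * w = (RtoC (IZR (al*d+be*b)) + RtoC (IZR (al*c+be*a)) * z) * e)%C).
  { intros al be. rewrite !plus_IZR, !mult_IZR, !RtoC_plus, !RtoC_mult.
    rewrite Cmult_plus_distr_r, Cmult_plus_distr_r, <- !Cmult_assoc, Hz.
    unfold e.
    replace (RtoC (IZR al)) with (RtoC (IZR al) * RtoC (IZR (a*d - b*c)))%C at 1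
      by (rewrite hdet; rewrite Cmult_1_r; reflexivity).
    replace (RtoC (IZR be) * w)%C with (RtoC (IZR be) * w * RtoC (IZR (a*d - b*c)))%C
      by (rewrite hdet; rewrite Cmult_1_r; reflexivity).
    rewrite minus_IZR, !mult_IZR, RtoC_minus, !RtoC_mult. ring. }
  assert (Hglb : Glb_Rbar (lattice_norms w) = Finite (Cmod e)).
  { apply is_glb_Rbar_unique. split.
    - intros v [al [be [Hne ->]]]. simpl. rewrite Hid, Cmod_mult.
      rewrite <- (Rmult_1_l (Cmod e)) at 1. apply Rmult_le_compat_r; [apply Cmod_ge_0|].
      apply Cmod_ge1.
      set (u := (z - RtoC (IZR n))%C) in *.
      replace z with (u + RtoC (IZR n))%C by (unfold u; ring).
      assert (Hu : 1 <= fst u ^ 2 + snd u ^ 2).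
      { rewrite <- Cmod_sq. nra. }
      clearbody u. destruct u as [ux uy]. unfold Re in Hre. simpl in Hre, Hu |- *.
      pose proof (key_ineq (al*d+be*b + (al*c+be*a)*n) (al*c+be*a) ux uy) as K.
      rewrite plus_IZR, mult_IZR in K.
      assert (Hne' : ((al * d + be * b + (al * c + be * a) * n)%Z, (al * c + be * a)%Z) <> (0%Z, 0%Z)).
      2:{ assert (Hu2 : 1 <= ux^2+uy^2) by (simpl; lra). assert (K' := K Hne' Hre Hu2).
          eapply Rle_trans; [exact K'|]; right; simpl; ring. }
      intros Heq. injection Heq. intros E1 E2. apply Hne.
      rewrite E1, Z.mul_0_l, Z.add_0_r in E2.
      assert (al = a * (al*d+be*b) - b * (al*c+be*a))%Z.
      { transitivity (al * (a*d-b*c))%Z; [rewrite hdet; ring| ring]. }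
      assert (be = - c * (al*d+be*b) + d * (al*c+be*a))%Z.
      { transitivity (be * (a*d-b*c))%Z; [rewrite hdet; ring| ring]. }
      rewrite E1, E2 in *. f_equal; lia.
    - intros bd Hb. apply Hb. exists a, (- c)%Z. split.
      + intros H. injection H. lia.
      + unfold e. rewrite opp_IZR, RtoC_opp. f_equal. ring. }
  rewrite Hglb. simpl real. rewrite Cmod_sq. unfold e, w. simpl.
  pose proof (f_equal (fun t => t ^ 2) Hc) as Hc2. cbv beta in Hc2.
  rewrite Cmod_sq in Hc2. simpl in Hc2.
  apply (f_equal IZR) in Hcq. rewrite !mult_IZR in Hcq.
  assert (Ha : IZR a = IZR c * (IZR p / IZR q)) by (rewrite <- Hinf; field; auto).
  rewrite Ha. set (t := IZR p / IZR q) in *.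
  assert (Hk : (t - x)^2 + y^2 = 2*r*y) by (simpl in Hc2 |- *; nra).
  transitivity ((IZR c * IZR c) * ((t - x)^2 + y^2) / y); [field; lra|].
  rewrite Hk, Hcq. field. lra.
Qed.
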